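(* Let $n\ge1$ and let $\lambda$ be a partition of $n$. The state-space complexity of $\mathcal{L}(\lambda)$ is at most $n+1$ and that of $\mathcal{D}(\lambda)$ is at most $n$ (both attained for $\lambda=(n)$). Moreover there is an absolute constant $C>0$ such that the state-space complexity of each of $\mathcal{L}(\lambda)$ and $\mathcal{D}(\lambda)$ is at least $C\sqrt{n}$.
   Context: A partition of $n$ is a non-increasing sequence $\lambda=(\lambda_1,\dots,\lambda_r)$ of positive integers with sum $n$; $()$ is the empty partition. For non-negative $i,j$, $\lambda[i,j]$ is $(\lambda_{i+1}-j,\dots,\lambda_r-j)$ with all non-positive entries removed. LCTR: positions $\mathcal{L}(\mu)$; if $\mu\neq()$ the two moves go to $\mathcal{L}(\mu[1,0])$ and $\mathcal{L}(\mu[0,1])$; $\mathcal{L}(())$ is terminal. Downright: positions $\mathcal{D}(\mu)$, $\mu$ nonempty with $s$ parts; a move to $\mathcal{D}(\mu[1,0])$ exists iff $s>1$, a move to $\mathcal{D}(\mu[0,1])$ exists iff $\mu_1>1$. The game tree of a position $p$ is the rooted tree with root $p$ in which each move gives a child, the root of the game tree of the resulting position. Two positions are called distinct if their game trees are not isomorphic as rooted trees. The state-space complexity of a game started at $p$ is the number of pairwise distinct positions reachable from $p$ by zero or more moves. *)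

(* Defs.v *)
From Stdlib Require Import List Permutation Relations Reals.
From mathcomp Require Import all_boot.
Set Implicit Arguments. Unset Strict Implicit. Unset Printing Implicit Defensive.

Definition is_partition (n : nat) (l : seq nat) : bool :=
  [&& sorted (fun x y => y <= x) l, all (fun x => 0 < x) l & sumn l == n].

(* lambda[i,j] = (lambda_{i+1}-j, ..., lambda_r - j) with non-positive entries removed *)
Definition psh (i j : nat) (l : seq nat) : seq nat :=
  filter (fun x => 0 < x) (map (fun x => x - j) (drop i l)).

(* A game is given by its move function: list (with multiplicity) of successor positions. *)
Definition game := seq nat -> seq (seq nat).

Definition lctr_moves : game := fun mu =>
  if mu is [::] then [::] else [:: psh 1 0 mu; psh 0 1 mu].

Definition downright_moves : game := fun mu =>
  (if 1 < size mu then [:: psh 1 0 mu] else [::]) ++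
  (if 1 < head 0 mu then [:: psh 0 1 mu] else [::]).

(* Rooted trees with unordered children (children stored as a list). *)
Inductive gtree : Type := Node : list gtree -> gtree.

Inductive tiso : gtree -> gtree -> Prop :=
| tiso_node : forall (s1 s2 s2' : list gtree),
    Permutation s2 s2' -> Forall2 tiso s1 s2' -> tiso (Node s1) (Node s2).

Inductive game_tree (g : game) : seq nat -> gtree -> Prop :=
| gt_node : forall p ts, Forall2 (game_tree g) (g p) ts -> game_tree g p (Node ts).

Definition distinct_pos (g : game) (p q : seq nat) : Prop :=
  exists tp tq, game_tree g p tp /\ game_tree g q tq /\ ~ tiso tp tq.

Definition step (g : game) (p q : seq nat) : Prop := q \in g p.
Definition reachable (g : game) (p q : seq nat) : Prop := clos_refl_trans _ (step g) p q.

Definition distinct_family (g : game) (p : seq nat) (s : seq (seq nat)) : Prop :=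
  (forall q, q \in s -> reachable g p q) /\
  (forall i j, i < j -> j < size s -> distinct_pos g (nth [::] s i) (nth [::] s j)).

Definition ssc_le (g : game) (p : seq nat) (k : nat) : Prop :=
  forall s, distinct_family g p s -> size s <= k.
Definition ssc_ge (g : game) (p : seq nat) (k : nat) : Prop :=
  exists s, distinct_family g p s /\ k <= size s.

(* Main.v *)
Require Import Defs.
From Stdlib Require Import Reals.
From mathcomp Require Import all_boot.
From Stdlib Require Import List Permutation Relations Lia.
From mathcomp Require Import all_boot.
From mathcomp Require Import zify.
Set Implicit Arguments. Unset Strict Implicit. Unset Printing Implicit Defensive.
Set Implicit Arguments. Unset Strict Implicit. Unset Printing Implicit Defensive.

Definition pos := fun x : nat => 0 < x.
Definition msr (p : seq nat) := size p + sumn p.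

Lemma msr_filt j s : msr (filter (fun x => 0 < x) (map (fun x => x - j) s)) <= msr s.
Proof.
rewrite /msr; elim: s => //= x s; case: ifP => /= _; lia.
Qed.

Lemma lctr_shape p q : q \in lctr_moves p -> p <> [::] /\ (q = psh 1 0 p \/ q = psh 0 1 p).
Proof.
case: p => [|x r] //=; rewrite !inE => /orP [] /eqP ->; split => //; tauto.
Qed.

Lemma lctr_msr p q : q \in lctr_moves p -> msr q < msr p.
Proof.
case/lctr_shape; case: p => [|x r] // _ [] ->.
- rewrite /psh /= drop0. have := msr_filt 0 r. rewrite /msr /=. lia.
- rewrite /psh /=. have := msr_filt 1 r. case: ifP; rewrite /msr /=; lia.
Qed.

Lemma dr_sub p q : q \in downright_moves p -> q \in lctr_moves p.
Proof.
rewrite /downright_moves; case: p => [|x r] /=.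
- by [].
- rewrite mem_cat !inE; case: ifP => _; case: ifP => _; rewrite ?inE ?orbF //=;
  idtac. all: try (by move=> /eqP ->; rewrite ?eqxx ?orbT). all: try (move=> H; exact H).
Qed.

Lemma dr_msr p q : q \in downright_moves p -> msr q < msr p.
Proof. by move/dr_sub/lctr_msr. Qed.

Section G.
Variable g : game.
Hypothesis Hm : forall p q, q \in g p -> msr q < msr p.

Lemma ex_F2 (A B : Type) (P : A -> B -> Prop) (l : list A) :
  (forall x, In x l -> exists t, P x t) -> exists ts, Forall2 P l ts.
Proof.
elim: l => [|x l IH] H; first by exists nil; constructor.
have [t Ht] := H x (or_introl erefl).
have [ts Hts] := IH (fun y hy => H y (or_intror hy)).
by exists (t :: ts); constructor.
Qed.

Lemma inP (x : seq nat) (l : seq (seq nat)) : In x l -> x \in l.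
Proof. elim: l => //= y l IH [->|/IH h]; by rewrite inE ?eqxx ?h ?orbT. Qed.

Lemma gt_ex p : exists t, game_tree g p t.
Proof.
have : forall N p, msr p < N -> exists t, game_tree g p t.
  elim=> [//|N IH] q hq.
  have [ts Hts] : exists ts, Forall2 (game_tree g) (g q) ts.
    apply: ex_F2 => x /inP hx; apply: IH; have := Hm hx; lia.
  by exists (Node ts); constructor.
by move=> /(_ (msr p).+1 p (ltnSn _)).
Qed.

Lemma F2_uniq (A B : Type) (P : A -> B -> Prop) (l : list A) ts1 ts2 :
  (forall x, In x l -> forall a b, P x a -> P x b -> a = b) ->
  Forall2 P l ts1 -> Forall2 P l ts2 -> ts1 = ts2.
Proof.
move=> H H1; elim: H1 ts2 H => [|x y l' l'' hxy _ IH] ts2 H H2; inversion H2; subst => //.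
rewrite (H x (or_introl erefl) _ _ hxy H3); congr cons.
apply: IH => // z hz; exact: H z (or_intror hz).
Qed.

Lemma gt_uniq p t1 t2 : game_tree g p t1 -> game_tree g p t2 -> t1 = t2.
Proof.
have : forall N p, msr p < N -> forall t1 t2, game_tree g p t1 -> game_tree g p t2 -> t1 = t2.
  elim=> [//|N IH] q hq u1 u2 H1 H2; inversion H1; inversion H2; subst.
  congr Node; apply: (F2_uniq _ H H4) => x /inP hx; apply: IH; have := Hm hx; lia.
by move=> /(_ (msr p).+1 p (ltnSn _)); apply.
Qed.
End G.

Fixpoint th (t : gtree) : nat := match t with Node l =>
  S ((fix hl (l : list gtree) : nat := match l with nil => 0 | x :: r => Nat.max (th x) (hl r) end) l) end.
Fixpoint hl (l : list gtree) : nat := match l with nil => 0 | x :: r => Nat.max (th x) (hl r) end.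
Lemma thE l : th (Node l) = S (hl l).
Proof. by elim: l. Qed.

Lemma hl_perm l1 l2 : Permutation l1 l2 -> hl l1 = hl l2.
Proof. elim=> //= *; lia. Qed.

Lemma hl_in c l : In c l -> th c <= hl l.
Proof. elim: l => //= x l IH [->|/IH]; lia. Qed.

Lemma tiso_th t1 t2 : tiso t1 t2 -> th t1 = th t2.
Proof.
have : forall N t1 t2, th t1 < N -> tiso t1 t2 -> th t1 = th t2.
  elim=> [//|N IH] u1 u2 hu H; inversion H; subst.
  rewrite !thE (hl_perm H0); congr S.
  move: hu; rewrite thE => hu.
  have : forall c, In c s1 -> th c < N by move=> c /hl_in; lia.
  elim: H1 {H H0 hu} => //= x y l l' hxy _ IHl hc.
  rewrite (IH x y (hc x (or_introl erefl)) hxy) IHl // => c hc'; exact: hc c (or_intror hc').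
by move=> /(_ (th t1).+1); apply.
Qed.

Fixpoint tiso_refl t : tiso t t := match t with Node s => tiso_node (Permutation_refl s)
  ((fix F l : Forall2 tiso l l := match l with nil => Forall2_nil _ | x :: r => Forall2_cons x x (tiso_refl x) (F r) end) s) end.

Section G2.
Variable g : game.
Hypothesis Hm : forall p q, q \in g p -> msr q < msr p.

Lemma distinct_neq p q : distinct_pos g p q -> p <> q.
Proof.
move=> [tp [tq [hp [hq hn]]]] e; subst q.
rewrite (gt_uniq Hm hp hq) in hn; exact: hn (tiso_refl tq).
Qed.

Lemma fam_uniq p s : distinct_family g p s -> uniq s.
Proof.
move=> [_ H]; apply: contraT => /(uniqPn [::]) [i [j [hij hj he]]].
by case: (distinct_neq (H i j hij hj) he).
Qed.

Lemma step_th p q tp tq : game_tree g p tp -> q \in g p -> game_tree g q tq -> th tq < th tp.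
Proof.
move=> Hp hq Hq; inversion Hp; subst.
have : exists c, game_tree g q c /\ In c ts.
  elim: H hq {Hp} => //= x y l l' hxy _ IH; rewrite inE => /orP [/eqP ->|/IH [c [h1 h2]]].
  - by exists y; split => //; left.
  - by exists c; split => //; right.
move=> [c [hc hin]]; rewrite (gt_uniq Hm Hq hc) thE; have := hl_in hin; lia.
Qed.

Lemma chain_fam (f : nat -> seq nat) k :
  (forall t, t.+1 < k -> f t.+1 \in g (f t)) -> distinct_family g (f 0) (mkseq f k).
Proof.
move=> Hf; split.
- move=> q /mapP [t]; rewrite mem_iota add0n => /andP [_ ht] ->.
  elim: t ht => [|t IH] ht; first exact: rt_refl.
  apply: rt_trans (IH (ltnW ht)) _; apply: rt_step; exact: Hf.
- move=> i j hij; rewrite size_mkseq => hj; rewrite !nth_mkseq //; last exact: ltn_trans hj.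
  have [ti hti] := gt_ex Hm (f i); have [tj htj] := gt_ex Hm (f j).
  exists ti, tj; split => //; split => // /tiso_th e.
  suff : th tj < th ti by lia. clear e.
  rewrite -(subnK hij) in htj hj; move: (j - i.+1) htj hj => d.
  elim: d tj => [|d IH] tj htj hj.
  + exact: step_th hti (Hf _ hj) htj.
  + have [tm htm] := gt_ex Hm (f (d + i.+1)).
    have := IH tm htm (ltnW hj); have := step_th htm (Hf _ hj) htj; lia.
Qed.
End G2.

Definition geR := fun x y : nat => y <= x.
Lemma geR_trans : transitive geR.
Proof. rewrite /geR => y x z h1 h2; lia. Qed.

Lemma psh_pos i j l : all (fun x => 0 < x) (psh i j l).
Proof. exact: filter_all. Qed.

Lemma psh00 l : all (fun x => 0 < x) l -> psh 0 0 l = l.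
Proof. rewrite /psh drop0; elim: l => //= x l IH /andP [h1 h2]; by rewrite subn0 h1 IH. Qed.

Lemma psh01 i j l : psh 0 1 (psh i j l) = psh i j.+1 l.
Proof.
rewrite /psh drop0; elim: (drop i l) => //= x s IH.
case: (ltnP 0 (x - j)) => h /=.
- by rewrite -IH (_ : x - j - 1 = x - j.+1) //; lia.
- by rewrite (_ : (0 < x - j.+1) = false) ?IH //; lia.
Qed.

Lemma psh10 u : psh 1 0 u = filter (fun x => 0 < x) (behead u).
Proof. rewrite /psh drop1; congr filter; elim: (behead u) => //= x r ->; by rewrite subn0. Qed.

Lemma filt_nil j s : all (fun y => y <= j) s -> filter (fun x => 0 < x) (map (fun x => x - j) s) = [::].
Proof. elim: s => //= x s IH /andP [h1 h2]; rewrite IH // (_ : (0 < x - j) = false) //; lia. Qed.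

Lemma psh_comp10 i j l : sorted geR l -> psh 1 0 (psh i j l) = psh i.+1 j l.
Proof.
move=> /(drop_sorted i); rewrite psh10 /psh (_ : drop i.+1 l = behead (drop i l)); last by rewrite -drop1 drop_drop add1n.
case: (drop i l) => [|x s] //= hs.
case: (ltnP 0 (x - j)) => h /=.
- by rewrite filter_id.
- rewrite filt_nil //; have := order_path_min geR_trans hs; apply: sub_all => y; rewrite /geR; lia.
Qed.

Lemma reach_inv (g : game) (P : seq nat -> Prop) p q :
  P p -> (forall a b, P a -> b \in g a -> P b) -> reachable g p q -> P q.
Proof.
move=> hp hs H; have {}H := @clos_rt_rtn1 _ _ _ _ H; elim: H => // y z hyz _ IH; exact: hs _ _ IH hyz.
Qed.

Lemma reach_psh (g : game) n l q :
  (forall p q, q \in g p -> q = psh 1 0 p \/ q = psh 0 1 p) ->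
  is_partition n l -> reachable g l q -> exists i j, q = psh i j l.
Proof.
move=> hg /and3P [hs hp _]; apply: (reach_inv (P := fun q => exists i j, q = psh i j l)).
- by exists 0, 0; rewrite psh00.
- move=> a b [i [j ->]] /hg [] ->; [exists i.+1, j; exact: psh_comp10 | exists i, j.+1; exact: psh01].
Qed.

Definition cells (l : seq nat) :=
  flatten [seq [seq psh i j l | j <- iota 0 (nth 0 l i)] | i <- iota 0 (size l)].

Lemma size_cells l : size (cells l) = sumn l.
Proof.
rewrite /cells size_flatten /shape -map_comp.
rewrite (eq_map (g := nth 0 l)); first by rewrite -/(mkseq _ _) mkseq_nth.
by move=> i /=; rewrite size_map size_iota.
Qed.

Lemma psh_cells n l i j : is_partition n l -> psh i j l = [::] \/ psh i j l \in cells l.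
Proof.
move=> /and3P [hs hp _].
case: (ltnP i (size l)) => hi; last by left; rewrite /psh drop_oversize.
case: (ltnP j (nth 0 l i)) => hj.
- right; apply/flattenP; exists [seq psh i j l | j <- iota 0 (nth 0 l i)].
  + by apply: map_f; rewrite mem_iota.
  + by apply: map_f; rewrite mem_iota.
- left; rewrite /psh (drop_nth 0 hi) filt_nil //=; rewrite hj /=.
  have := drop_sorted i.+1 hs; have := drop_sorted i hs; rewrite (drop_nth 0 hi) /= => hs'.
  move=> _; have := order_path_min geR_trans hs'; apply: sub_all => y; rewrite /geR; lia.
Qed.

Lemma dr_ne a b : all (fun x => 0 < x) a -> b \in downright_moves a -> b <> [::].
Proof.
rewrite /downright_moves mem_cat; case: a => [|x r] //= /andP [hx hr].
case/orP.
- case: ifP => // hs; rewrite inE => /eqP ->; rewrite psh10 /=.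
  case: r hs hr => [|y r] //= _ /andP [hy _]; by rewrite hy.
- case: ifP => // hs; rewrite inE => /eqP ->; rewrite /psh /=.
  by rewrite (_ : 0 < x - 1 = true) //; lia.
Qed.

Lemma part1 n l : 1 <= n -> is_partition n l ->
  ssc_le lctr_moves l n.+1 /\ ssc_le downright_moves l n.
Proof.
move=> hn hl; have hl' := hl; move: hl' => /and3P [_ _ /eqP hsum]; split => s hs.
- have hu := fam_uniq lctr_msr hs.
  have -> : n.+1 = size ([::] :: cells l) by rewrite /= size_cells hsum.
  apply: uniq_leq_size => // q hq; have := hs.1 q hq.
  move/(reach_psh (fun p q h => (lctr_shape h).2) hl) => [i [j ->]].
  by case: (psh_cells i j hl) => [->|h]; rewrite inE ?eqxx // h orbT.
- have hu := fam_uniq dr_msr hs.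
  have -> : n = size (cells l) by rewrite size_cells hsum.
  apply: uniq_leq_size => // q hq; have := hs.1 q hq.
  move/(reach_inv (P := fun q => (exists i j, q = psh i j l) /\ q <> [::])).
  case.
  + split; first by exists 0, 0; rewrite psh00 //; case/and3P: hl.
    by move=> e; move: hsum hn; rewrite e /=; lia.
  + move=> a b [[i [j ea]] _] hb; split; last by apply: dr_ne hb; rewrite ea psh_pos.
    move: (lctr_shape (dr_sub hb)).2 => [] ->; rewrite ea.
    * by exists i.+1, j; apply: psh_comp10; case/and3P: hl.
    * by exists i, j.+1; apply: psh01.
  + move=> [i [j ->]] hne; by case: (psh_cells i j hl).
Qed.

Lemma lc10 a w : psh 1 0 (a :: w) \in lctr_moves (a :: w).
Proof. by rewrite /= inE eqxx. Qed.
Lemma lc01 a w : psh 0 1 (a :: w) \in lctr_moves (a :: w).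
Proof. by rewrite /= !inE eqxx orbT. Qed.
Lemma dr10 u : 1 < size u -> psh 1 0 u \in downright_moves u.
Proof. by move=> h; rewrite /downright_moves h mem_cat inE eqxx. Qed.
Lemma dr01 u : 1 < head 0 u -> psh 0 1 u \in downright_moves u.
Proof. by move=> h; rewrite /downright_moves h mem_cat inE eqxx orbT. Qed.

Lemma chain_ge g f k : (forall p q, q \in g p -> msr q < msr p) ->
  (forall t, t.+1 < k -> f t.+1 \in g (f t)) -> ssc_ge g (f 0) k.
Proof. move=> hm hf; exists (mkseq f k); rewrite size_mkseq; split => //; exact: chain_fam. Qed.

Lemma all_drop (a : pred nat) t s : all a s -> all a (drop t s).
Proof. by rewrite -{1}(cat_take_drop t s) all_cat => /andP []. Qed.

Lemma cols n x l : is_partition n (x :: l) -> ssc_ge lctr_moves (x :: l) x.+1 /\ ssc_ge downright_moves (x :: l) x.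
Proof.
move=> hl; have hp : all (fun y => 0 < y) (x :: l) by case/and3P: hl.
have e0 : psh 0 0 (x :: l) = x :: l by rewrite psh00.
have hc : forall t, t < x -> psh 0 t (x :: l) = (x - t) :: psh 0 t l.
  by move=> t ht; rewrite /psh /= drop0 (_ : 0 < x - t = true) //; lia.
split; rewrite -{1}e0.
- apply: (chain_ge (f := fun t => psh 0 t (x :: l))) => [|t ht]; first exact: lctr_msr.
  by rewrite -psh01 hc //; apply: lc01.
- apply: (chain_ge (f := fun t => psh 0 t (x :: l))) => [|t ht]; first exact: dr_msr.
  by rewrite -psh01; apply: dr01; rewrite hc /=; lia.
Qed.

Lemma rows n l : is_partition n l -> ssc_ge lctr_moves l (size l).+1 /\ ssc_ge downright_moves l (size l).
Proof.
move=> hl; have hp : all (fun y => 0 < y) l by case/and3P: hl.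
have e0 : drop 0 l = l by rewrite drop0.
have hr : forall t, psh 1 0 (drop t l) = drop t.+1 l.
  move=> t; rewrite psh10 -drop1 drop_drop add1n; apply/all_filterP; exact: all_drop.
split; rewrite -{1}e0.
- apply: (chain_ge (f := fun t => drop t l)) => [|t ht]; first exact: lctr_msr.
  rewrite -hr (drop_nth 0 (_ : t < size l)) //; apply: lc10.
- apply: (chain_ge (f := fun t => drop t l)) => [|t ht]; first exact: dr_msr.
  by rewrite -hr; apply: dr10; rewrite size_drop; lia.
Qed.

Lemma sum_le x l : all (fun y => y <= x) l -> sumn l <= size l * x.
Proof. elim: l => //= y l IH /andP [h1 /IH]; lia. Qed.

Lemma ge_mono g p k k' : ssc_ge g p k' -> k <= k' -> ssc_ge g p k.
Proof. move=> [s [hs hk]] hkk; exists s; split => //; exact: leq_trans hkk hk. Qed.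

Theorem mainTheorem20 :
  (forall (n : nat) (lam : seq nat), 1 <= n -> is_partition n lam ->
     ssc_le lctr_moves lam n.+1 /\ ssc_le downright_moves lam n) /\
  (forall n : nat, 1 <= n ->
     ssc_ge lctr_moves [:: n] n.+1 /\ ssc_ge downright_moves [:: n] n) /\
  (exists C : R, Rlt 0 C /\
     forall (n : nat) (lam : seq nat), 1 <= n -> is_partition n lam ->
       (exists k, Rle (Rmult C (sqrt (INR n))) (INR k) /\ ssc_ge lctr_moves lam k) /\
       (exists k, Rle (Rmult C (sqrt (INR n))) (INR k) /\ ssc_ge downright_moves lam k)).
Proof.
split; first exact: part1.
split.
  move=> n hn; apply: (cols (n := n)).
  by rewrite /is_partition /= hn addn0 eqxx.
exists R1; split; first exact: Rlt_0_1.
move=> n l hn hl.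
case: l hl => [|x l] hl; first by move: hl hn => /and3P [_ _ /eqP <-].
have [c1 c2] := cols hl; have [r1 r2] := rows hl.
set k := maxn (size (x :: l)) x.
have hk : Rle (Rmult R1 (sqrt (INR n))) (INR k).
  have hnk : n <= k * k.
    have [hs _ /eqP <-] := and3P hl.
    have : all (fun y => y <= x) (x :: l).
      by rewrite /= leqnn /=; have := order_path_min geR_trans hs.
    move/sum_le => h; apply: leq_trans h _; rewrite /k; apply: leq_mul; [exact: leq_maxl | exact: leq_maxr].
  rewrite Rmult_1_l -(sqrt_square (INR k) (pos_INR k)) -mult_INR.
  by apply: sqrt_le_1_alt; apply: le_INR; apply/leP.
split; exists k; split => //.
- rewrite /k; case: (leqP (size (x :: l)) x) => h.
  + apply: ge_mono c1 _; lia.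
  + apply: ge_mono r1 _; lia.
- rewrite /k; case: (leqP (size (x :: l)) x) => h.
  + apply: ge_mono c2 _; lia.
  + apply: ge_mono r2 _; lia.
Qed.
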